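(* Let $G$ be a finite graph, $k$ a positive integer, $c$ a $k$-colouring of $G$ and $u\in V(G)$. Then $D_c$ is an independent set of $\mathcal{K}_k(G)$, and no colouring in $D_c$ is adjacent in $\mathcal{K}_k(G)$ to a colouring in $C_{c,u}$.
   Context: A $k$-colouring of $G$ is a map $c:V(G)\to\{1,\dots,k\}$ with $c(x)\neq c(y)$ for every edge $xy$. A Kempe swap from $c$: choose distinct colours $i,j$ and a connected component $H$ of the subgraph of $G$ induced by $c^{-1}(\{i,j\})$, and exchange colours $i,j$ on $H$; it is trivial if it changes the colour of exactly one vertex. $\mathcal{K}_k(G)$ has as vertices all $k$-colourings, two distinct colourings adjacent iff one is obtained from the other by a single Kempe swap. $C_{c,u}$ is the set of $k$-colourings differing from $c$ exactly at $u$; $D_c$ is the set of neighbours of $c$ in $\mathcal{K}_k(G)$ obtained from $c$ by a non-trivial Kempe swap (i.e. differing from $c$ at at least two vertices). *)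

(* Defs.v *)
(* A finite simple graph is a symmetric irreflexive relation
   e on a finType T. *)
From mathcomp Require Import all_boot.
Set Implicit Arguments. Unset Strict Implicit. Unset Printing Implicit Defensive.

Section Kempe.
Variables (T : finType) (e : rel T) (k : nat).

Definition colouring := {ffun T -> 'I_k}.

Definition proper_col (c : colouring) : bool :=
  [forall x, forall y, e x y ==> (c x != c y)].

Definition in2 (c : colouring) (i j : 'I_k) (x : T) : bool :=
  (c x == i) || (c x == j).
Definition krel (c : colouring) (i j : 'I_k) : rel T :=
  [rel x y | [&& e x y, in2 c i j x & in2 c i j y]].

(* connected component of v in the induced subgraph (v must be in it) *)
Definition kcomp (c : colouring) (i j : 'I_k) (v : T) : {set T} :=
  [set w | connect (krel c i j) v w].

Definition swap_on (c : colouring) (i j : 'I_k) (H : {set T}) : colouring :=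
  [ffun x => if x \in H then (if c x == i then j else i) else c x].

Definition kempe_step (c d : colouring) : Prop :=
  exists i j : 'I_k, i != j /\ exists v : T, in2 c i j v /\
    d = swap_on c i j (kcomp c i j v).

Definition kadj (c d : colouring) : Prop :=
  [/\ proper_col c, proper_col d, c != d & (kempe_step c d \/ kempe_step d c)].

Definition Cset (c : colouring) (u : T) (d : colouring) : Prop :=
  [/\ proper_col d, d u != c u & forall x, x != u -> d x = c x].

Definition Dset (c : colouring) (d : colouring) : Prop :=
  [/\ kadj c d, kempe_step c d & 2 <= #|[set x | c x != d x]|].

End Kempe.

(* Main.v *)
Require Import Defs.
From mathcomp Require Import all_boot.
Set Implicit Arguments. Unset Strict Implicit. Unset Printing Implicit Defensive.

Definition ppair (k : nat) (i j x y : 'I_k) : bool :=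
  ((x == i) && (y == j)) || ((x == j) && (y == i)).

Lemma pp_sym k (i j x y : 'I_k) : ppair i j x y -> ppair i j y x.
Proof. by rewrite /ppair => /orP[/andP[/eqP-> /eqP->]|/andP[/eqP-> /eqP->]]; rewrite !eqxx ?orbT. Qed.

Lemma pp_flip k (i j x y : 'I_k) : ppair i j x y -> ppair x y i j.
Proof. by rewrite /ppair => /orP[/andP[/eqP-> /eqP->]|/andP[/eqP-> /eqP->]]; rewrite !eqxx ?orbT. Qed.

Lemma pp_trans k (i j p q x y : 'I_k) : ppair i j x y -> ppair p q x y -> ppair i j p q.
Proof.
rewrite /ppair => /orP[/andP[/eqP-> /eqP->]|/andP[/eqP-> /eqP->]]
  /orP[/andP[/eqP-> /eqP->]|/andP[/eqP-> /eqP->]]; rewrite !eqxx ?orbT //.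
Qed.

Lemma pp_uniq k (i j y z1 z2 : 'I_k) : ppair i j y z1 -> ppair i j y z2 -> z1 = z2.
Proof.
rewrite /ppair => /orP[/andP[/eqP-> /eqP->]|/andP[/eqP-> /eqP->]]
  /orP[/andP[/eqP E /eqP->]|/andP[/eqP E /eqP->]] //; by rewrite E.
Qed.

Lemma pp_neq k (i j x y : 'I_k) : i != j -> ppair i j x y -> x != y.
Proof.
move=> ij; rewrite /ppair => /orP[/andP[/eqP-> /eqP->]|/andP[/eqP-> /eqP->]] //.
by rewrite eq_sym.
Qed.

Lemma pp_in k (i j x y : 'I_k) : ppair i j x y -> (x == i) || (x == j).
Proof. by rewrite /ppair => /orP[/andP[/eqP-> _]|/andP[/eqP-> _]]; rewrite eqxx ?orbT. Qed.

Lemma pp_in2 k (i j x y : 'I_k) : ppair i j x y -> (y == i) || (y == j).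
Proof. by move/pp_sym/pp_in. Qed.

Lemma pp_of k (i j x y : 'I_k) : x != y -> (x == i) || (x == j) -> (y == i) || (y == j) ->
  ppair i j x y.
Proof.
rewrite /ppair => xy /orP[/eqP ?|/eqP ?] /orP[/eqP ?|/eqP ?]; subst;
  rewrite ?eqxx ?orbT //; by rewrite eqxx in xy.
Qed.

Lemma pp_eqin k (i j p q : 'I_k) : ppair i j p q -> forall z : 'I_k,
  ((z == i) || (z == j)) = ((z == p) || (z == q)).
Proof.
rewrite /ppair => /orP[/andP[/eqP-> /eqP->]|/andP[/eqP-> /eqP->]] z //.
by rewrite orbC.
Qed.

Definition kspec (T : finType) (e : rel T) (k : nat) (X Y : colouring T k) (p q : 'I_k)
  (K : {set T}) :=
 [/\ p != q, forall x, (x \in K) = (X x != Y x),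
     forall x, x \in K -> ppair p q (X x) (Y x) &
     forall x y, x \in K -> (y \in K) = connect (krel e X p q) x y].

Lemma krel_eq (T : finType) (e : rel T) (k : nat) (X Y : colouring T k) (p q r s : 'I_k) :
  in2 X p q =1 in2 Y r s -> krel e X p q =2 krel e Y r s.
Proof. by move=> H x y; rewrite /krel /= !H. Qed.

Lemma krel_sym (T : finType) (e : rel T) (k : nat) (X : colouring T k) (p q : 'I_k) :
  symmetric e -> connect_sym (krel e X p q).
Proof.
move=> es; apply: sym_connect_sym => x y; rewrite /krel /= es.
by case: (in2 X p q x); case: (in2 X p q y); rewrite ?andbF ?andbT.
Qed.

Lemma kspec_in2 (T : finType) (e : rel T) (k : nat) (X Y : colouring T k) p q K :
  kspec e X Y p q K -> in2 X p q =1 in2 Y p q.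
Proof.
case=> _ HK Hp _ x; rewrite /in2.
case xK: (x \in K).
  have := Hp _ xK => H; by rewrite (pp_in H) (pp_in2 H).
by move: xK; rewrite HK => /negbFE/eqP->.
Qed.

Lemma kspec_sym (T : finType) (e : rel T) (k : nat) (X Y : colouring T k) p q K :
  kspec e X Y p q K -> kspec e Y X p q K.
Proof.
move=> S; have E := kspec_in2 S; case: S => pq HK Hp Hc; split => //.
- by move=> x; rewrite HK eq_sym.
- by move=> x /Hp /pp_sym.
- by move=> x y xK; rewrite (Hc _ _ xK); apply: eq_connect; apply: krel_eq.
Qed.

Lemma comp_in2 (T : finType) (e : rel T) (k : nat) (X : colouring T k) i j v x :
  in2 X i j v -> connect (krel e X i j) v x -> in2 X i j x.
Proof.
move=> iv /connectP[s pth ->]; elim: s v iv pth => //= y s IH v iv /andP[/and3P[_ _ iny] pth].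
exact: IH pth.
Qed.

Lemma step_kspec (T : finType) (e : rel T) (k : nat) (X Y : colouring T k) :
  symmetric e -> kempe_step e X Y -> exists p q K, kspec e X Y p q K.
Proof.
move=> es [i [j [ij [v [iv ->]]]]]; exists i, j, (kcomp e X i j v).
have Hin x : x \in kcomp e X i j v -> in2 X i j x.
  by rewrite inE; apply: comp_in2.
split => //.
- move=> x; rewrite ffunE; case xK: (x \in _); last by rewrite eqxx.
  move: (Hin _ xK); rewrite /in2 => /orP[/eqP->|/eqP->]; rewrite ?eqxx.
    by rewrite ij.
  by rewrite eq_sym in ij; rewrite (negbTE ij) ij.
- move=> x xK; rewrite ffunE xK.
  move: (Hin _ xK); rewrite /in2 /ppair => /orP[/eqP->|/eqP->]; rewrite ?eqxx //.
  by rewrite eq_sym in ij; rewrite (negbTE ij) !eqxx orbT.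
- move=> x y; rewrite !inE => vx; apply: same_connect => //; exact: krel_sym.
Qed.

Lemma pp_trans2 k (i j a b y z : 'I_k) : ppair i j a b -> ppair a b y z -> ppair i j y z.
Proof.
rewrite /ppair => /orP[/andP[/eqP-> /eqP->]|/andP[/eqP-> /eqP->]] //.
by rewrite orbC.
Qed.

Lemma nontriv (T : finType) (e : rel T) (k : nat) (X Y : colouring T k) i j H :
  proper_col e X -> kspec e X Y i j H -> 2 <= #|[set x | X x != Y x]| ->
  exists x y, [/\ x \in H, y \in H & ppair i j (X x) (X y)].
Proof.
move=> pX [ij HK Hp Hc] /card_gt1P[v [w [vI wI vw]]].
have vH : v \in H by rewrite HK; move: vI; rewrite inE.
have wH : w \in H by rewrite HK; move: wI; rewrite inE.
have := wH; rewrite (Hc _ _ vH) => /connectP[s pth wE].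
case: s pth wE => [|z s] /=; first by move=> _ E; rewrite E eqxx in vw.
move=> /andP[/and3P[evz inv inz] _] _.
have zH : z \in H by rewrite (Hc _ _ vH); apply: connect1; rewrite /krel /= evz inv inz.
exists v, z; split => //; apply: pp_of => //.
by move/forallP: pX => /(_ v)/forallP/(_ z)/implyP/(_ evz).
Qed.

Lemma notinH (T : finType) (e : rel T) (k : nat) (X Y : colouring T k) i j H x :
  kspec e X Y i j H -> x \notin H -> X x = Y x.
Proof. by case=> _ HK _ _; rewrite HK => /negbNE/eqP. Qed.

Lemma inH (T : finType) (e : rel T) (k : nat) (X Y : colouring T k) i j H x :
  kspec e X Y i j H -> x \in H -> X x != Y x.
Proof. by case=> _ HK _ _; rewrite HK. Qed.

Lemma ppH (T : finType) (e : rel T) (k : nat) (X Y : colouring T k) i j H x :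
  kspec e X Y i j H -> x \in H -> ppair i j (X x) (Y x).
Proof. by case=> _ _ Hp _; apply: Hp. Qed.

Lemma outpp (T : finType) (e : rel T) (k : nat) (c d1 d2 : colouring T k) i j H1 a b H2 p q K x :
  kspec e c d1 i j H1 -> kspec e c d2 a b H2 -> kspec e d1 d2 p q K ->
  x \in H1 -> x \notin H2 -> ppair i j p q.
Proof.
move=> S1 S2 SK x1 x2.
have E := notinH S2 x2.
have xK : x \in K.
  by case: SK => _ -> _ _; rewrite -E eq_sym; exact: inH S1 x1.
have := ppH SK xK; rewrite -E => /pp_sym P.
exact: pp_trans (ppH S1 x1) P.
Qed.

Lemma getpe (T : finType) (e : rel T) (k : nat) (c d1 d2 : colouring T k) i j H1 a b H2 p q K :
  kspec e c d1 i j H1 -> kspec e c d2 a b H2 -> kspec e d1 d2 p q K ->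
  (exists x y, [/\ x \in H1, y \in H1 & ppair i j (c x) (c y)]) ->
  ppair i j a b \/ ppair i j p q.
Proof.
move=> S1 S2 SK [x [y [xH yH P]]].
case xH2: (x \in H2); last by right; apply: (outpp S1 S2 SK xH); rewrite xH2.
case yH2: (y \in H2); last by right; apply: (outpp S1 S2 SK yH); rewrite yH2.
left; apply: (pp_trans P); apply: pp_of.
- by case: S1 => ij _ _ _; apply: pp_neq P.
- exact: pp_in (ppH S2 xH2).
- exact: pp_in (ppH S2 yH2).
Qed.

Lemma in2_pp (T : finType) (k : nat) (X : colouring T k) i j p q :
  ppair i j p q -> in2 X i j =1 in2 X p q.
Proof. by move=> P x; rewrite /in2 (pp_eqin P). Qed.

Lemma part1 (T : finType) (e : rel T) (k : nat) (c d1 d2 : colouring T k) i j H1 a b H2 p q K :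
  kspec e c d1 i j H1 -> kspec e c d2 a b H2 -> kspec e d1 d2 p q K -> d1 != d2 ->
  (exists x y, [/\ x \in H1, y \in H1 & ppair i j (c x) (c y)]) ->
  (exists x y, [/\ x \in H2, y \in H2 & ppair a b (c x) (c y)]) -> False.
Proof.
move=> S1 S2 SK dne X1 X2.
have Pab : ppair i j a b.
  case: (getpe S1 S2 SK X1) => // A.
  case: (getpe S2 S1 (kspec_sym SK) X2) => [/pp_flip //|B].
  exact: pp_trans A B.
have [x0 Hx0] : exists x, d1 x != d2 x.
  case: (pickP (fun x => d1 x != d2 x)) => [x Hx|H0]; first by exists x.
  by case/negP: dne; apply/eqP/ffunP => x; have := H0 x => /negbFE/eqP.
have Ppq : ppair i j p q.
  case x1: (x0 \in H1); case x2: (x0 \in H2).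
  - have := pp_uniq (ppH S1 x1) (pp_trans2 Pab (ppH S2 x2)).
    by move=> E; rewrite E eqxx in Hx0.
  - by apply: (outpp S1 S2 SK x1); rewrite x2.
  - apply: pp_trans2 Pab _.
    by apply: (outpp S2 S1 (kspec_sym SK) x2); rewrite x1.
  - have := notinH S1 (negbT x1); have := notinH S2 (negbT x2).
    by move=> E2 E1; rewrite -E1 -E2 eqxx in Hx0.
have E1 : krel e c a b =2 krel e c i j.
  by apply: krel_eq => x; rewrite (in2_pp _ Pab).
have EK : krel e d1 p q =2 krel e c i j.
  by apply: krel_eq => x; rewrite -(in2_pp _ Ppq) (kspec_in2 S1).
have HH : forall z, z \in H1 -> z \in H2 -> False.
  move=> z z1 z2; case/negP: dne; apply/eqP/ffunP => x.
  have Ex : (x \in H1) = (x \in H2).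
    have [_ _ _ Hc1] := S1; have [_ _ _ Hc2] := S2.
    by rewrite (Hc1 z x z1) (Hc2 z x z2) (eq_connect E1).
  case x1: (x \in H1).
    have x2 : x \in H2 by rewrite -Ex.
    exact: pp_uniq (ppH S1 x1) (pp_trans2 Pab (ppH S2 x2)).
  have x2 : x \notin H2 by rewrite -Ex x1.
  by rewrite -(notinH S1 (negbT x1)) -(notinH S2 x2).
case: X1 => [x1 [_ [x1H _ _]]]; case: X2 => [x2 [_ [x2H _ _]]].
have x1n : x1 \notin H2 by apply/negP => /(HH _ x1H).
have x2n : x2 \notin H1 by apply/negP => /HH/(_ x2H).
have x1K : x1 \in K.
  case: SK => _ -> _ _; rewrite -(notinH S2 x1n) eq_sym; exact: inH S1 x1H.
have x2K : x2 \in K.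
  case: SK => _ -> _ _; rewrite -(notinH S1 x2n); exact: inH S2 x2H.
have [_ _ _ HcK] := SK; have [_ _ _ Hc1] := S1.
move: x2K; rewrite (HcK x1 x2 x1K) (eq_connect EK) -(Hc1 x1 x2 x1H).
by rewrite (negbTE x2n).
Qed.

Lemma part2 (T : finType) (e : rel T) (k : nat) (c d f : colouring T k) i j H p q K u :
  kspec e c d i j H -> kspec e d f p q K ->
  (exists x y, [/\ x \in H, y \in H & ppair i j (c x) (c y)]) ->
  f u != c u -> (forall x, x != u -> f x = c x) -> False.
Proof.
move=> S SK [x1 [y1 [x1H y1H P]]] fu fx.
have [ij _ _ Hc] := S; have [_ HKK _ HcK] := SK.
have [w [wH wu]] : exists w, w \in H /\ w != u.
  case: (eqVneq x1 u) => [E|ne]; last by exists x1.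
  exists y1; split => //; apply/eqP => E2; subst.
  by move: (pp_neq ij P); rewrite eqxx.
have wK : w \in K by rewrite HKK (fx _ wu) eq_sym; exact: inH S wH.
have Ppq : ppair i j p q.
  have := ppH SK wK; rewrite (fx _ wu) => /pp_sym Q.
  exact: pp_trans (ppH S wH) Q.
have EK : krel e d p q =2 krel e c i j.
  by apply: krel_eq => x; rewrite -(in2_pp _ Ppq) (kspec_in2 S).
have EKH : forall y, (y \in K) = (y \in H).
  by move=> y; rewrite (HcK w y wK) (eq_connect EK) -(Hc w y wH).
case uH: (u \in H).
  have uK : u \in K by rewrite EKH.
  have Q := ppH SK uK.
  have fin : (f u == i) || (f u == j) by rewrite (pp_eqin Ppq); exact: pp_in2 Q.
  have R : ppair i j (c u) (f u).
    apply: pp_of => //; first by rewrite eq_sym.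
    exact: pp_in (ppH S uH).
  have := pp_uniq (ppH S uH) R => E.
  by move: (inH SK uK); rewrite E eqxx.
have uK : u \notin K by rewrite EKH uH.
have := notinH SK uK; rewrite -(notinH S (negbT uH)) => E.
by rewrite E eqxx in fu.
Qed.

Lemma kadj_spec (T : finType) (e : rel T) (k : nat) (X Y : colouring T k) :
  symmetric e -> kadj e X Y -> X != Y /\ exists p q K, kspec e X Y p q K.
Proof.
move=> es [_ _ ne [st|st]]; split => //.
  exact: step_kspec.
have [p [q [K S]]] := step_kspec es st.
by exists p, q, K; apply: kspec_sym.
Qed.

Theorem lemma3p2 (T : finType) (e : rel T) (k : nat)
  (e_sym : symmetric e) (e_irr : irreflexive e) (k_pos : 0 < k)
  (c : colouring T k) (c_proper : proper_col e c) (u : T) :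
  (forall d1 d2 : colouring T k,
     Dset e c d1 -> Dset e c d2 -> ~ kadj e d1 d2) /\
  (forall d f : colouring T k,
     Dset e c d -> Cset e c u f -> ~ kadj e d f).
Proof.
split.
  move=> d1 d2 [_ st1 n1] [_ st2 n2] /(kadj_spec e_sym) [ne [p [q [K SK]]]].
  have [i [j [H1 S1]]] := step_kspec e_sym st1.
  have [a [b [H2 S2]]] := step_kspec e_sym st2.
  exact: (part1 S1 S2 SK ne (nontriv c_proper S1 n1) (nontriv c_proper S2 n2)).
move=> d f [_ st n] [_ fu fx] /(kadj_spec e_sym) [_ [p [q [K SK]]]].
have [i [j [H S]]] := step_kspec e_sym st.
exact: (part2 S SK (nontriv c_proper S n) fu fx).
Qed.
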